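(* Let $G=(V,E)$ be a finite simple graph, let $p$ be an even path in $G$, and let $w$ be a primitive even closed walk in $G$. Then $w/p$ is an even closed walk in $G/p$. Conversely, if $v$ is an even closed walk in $G/p$, then $v=w/p$ for some even closed walk $w$ in $G$.
   Context: A walk in $G$ is a sequence of vertices $(x_0,\dots,x_n)$ with $\{x_i,x_{i+1}\}\in E$; its length is $n$, it is even if $n$ is even and closed if $x_0=x_n$. A path is a walk $(x_0,\dots,x_n)$ with $d_G(x_i)=2$ for $1\le i\le n-1$ ($d_G$ = number of neighbours). For a list of edges $w=(e_1,\dots,e_{2n})$ put $e_{w^+}=e_1e_3\cdots e_{2n-1}$, $e_{w^-}=e_2e_4\cdots e_{2n}$ (monomials in $\mathbb{K}[E]$). A closed even walk $w$ is primitive if there is no other closed even walk $v$ in $G$ with $e_{v^+}\mid e_{w^+}$ and $e_{v^-}\mid e_{w^-}$. Contracting the path $p=(x_0,\dots,x_t)$: with a new vertex $y$, $V'=(V\setminus\{x_0,\dots,x_t\})\cup\{y\}$, $\chi:V\to V'$ is the identity off $p$ and sends every $x_i$ to $y$, and $G/p$ has edge set $\{\{\chi(u),\chi(u')\}:\{u,u'\}\in E\text{ not an edge of }p\}$ (repetitions ignored). For a walk $w$ in $G$, $w/p$ denotes the walk in $G/p$ obtained from $w$ by deleting the edges of $p$ and replacing each vertex $u$ by $\chi(u)$. *)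

(* Defs.v *)
From mathcomp Require Import all_boot.
Set Implicit Arguments. Unset Strict Implicit. Unset Printing Implicit Defensive.

Section Graphs.
Variable V : finType.

Definition simple_graph (E : {set {set V}}) : Prop :=
  forall e, e \in E -> #|e| = 2.

Definition degree (E : {set {set V}}) (x : V) : nat :=
  #|[set u | [set x; u] \in E]|.

(* A walk (x_0, ..., x_n) is represented by its first vertex x0 and the
   list s = [:: x_1; ...; x_n]; its length is n = size s. *)
Definition is_walk (E : {set {set V}}) (x0 : V) (s : seq V) : bool :=
  path (fun a b => [set a; b] \in E) x0 s.

Definition walk_len (s : seq V) : nat := size s.

Definition is_closed (x0 : V) (s : seq V) : bool := last x0 s == x0.

Definition is_even (s : seq V) : bool := ~~ odd (size s).

Definition walk_edges (x0 : V) (s : seq V) : seq {set V} :=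
  pairmap (fun a b => [set a; b]) x0 s.

(* Closed even walks of positive length (toric-ideal convention). *)
Definition closed_even_walk (E : {set {set V}}) (x0 : V) (s : seq V) : Prop :=
  [/\ is_walk E x0 s, is_closed x0 s, is_even s & 0 < size s].

Definition is_gpath (E : {set {set V}}) (x0 : V) (s : seq V) : Prop :=
  [/\ is_walk E x0 s, uniq (x0 :: s) &
      forall i, 0 < i < size s -> degree E (nth x0 (x0 :: s) i) = 2].

End Graphs.

Fixpoint odd_pos {A : Type} (l : seq A) : seq A :=
  match l with
  | x :: _ :: r => x :: odd_pos r
  | [:: x] => [:: x]
  | [::] => [::]
  end.
Definition even_pos {A : Type} (l : seq A) : seq A := odd_pos (behead l).

(* Monomials in K[E]: a list of edges e_{i1} ... e_{ik} is the monomial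
   whose exponent at e is the multiplicity of e in the list. *)
Definition monom {V : finType} (l : seq {set V}) : {set V} -> nat :=
  fun e => count_mem e l.
Definition mon_dvd {V : finType} (m1 m2 : {set V} -> nat) : Prop :=
  forall e, m1 e <= m2 e.

Definition e_plus {V : finType} (x0 : V) (s : seq V) := monom (odd_pos (walk_edges x0 s)).
Definition e_minus {V : finType} (x0 : V) (s : seq V) := monom (even_pos (walk_edges x0 s)).

Definition primitive {V : finType} (E : {set {set V}}) (x0 : V) (s : seq V) : Prop :=
  [/\ closed_even_walk E x0 s,
      ~ (e_plus x0 s =1 e_minus x0 s) &
      forall y0 t, closed_even_walk E y0 t ->
        mon_dvd (e_plus y0 t) (e_plus x0 s) ->
        mon_dvd (e_minus y0 t) (e_minus x0 s) ->
        e_plus y0 t =1 e_plus x0 s /\ e_minus y0 t =1 e_minus x0 s].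

(* Contraction of the path p = (p0 :: ps).  The vertex set of G/p is
   represented inside option T: None is the new vertex y, Some u (u not on p)
   is the old vertex u.  chi sends vertices of p to y. *)
Section Contraction.
Variable T : finType.
Variables (p0 : T) (ps : seq T).

Definition chi (u : T) : option T := if u \in p0 :: ps then None else Some u.

Definition path_edges : seq {set T} := walk_edges p0 ps.

Definition contr_edges (E : {set {set T}}) : {set {set option T}} :=
  [set [set chi u.1; chi u.2] |
     u in [set u : T * T | ([set u.1; u.2] \in E) && ([set u.1; u.2] \notin path_edges)]].

(* w/p: delete the edges of p from w and replace each vertex u by chi u.
   Given the walk (x0 :: s), the result is (chi x0 :: contr_walk x0 s). *)
Fixpoint contr_walk (a : T) (s : seq T) : seq (option T) :=
  match s with
  | [::] => [::]
  | b :: r => if [set a; b] \in path_edges then contr_walk b r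
              else chi b :: contr_walk b r
  end.

End Contraction.

(* Main.v *)
Require Import Defs.
From mathcomp Require Import all_boot.
From mathcomp Require Import all_order all_algebra zify.
Set Implicit Arguments. Unset Strict Implicit. Unset Printing Implicit Defensive.
Import GRing.Theory.

Lemma set2_inj (T : finType) (a b c d : T) :
  [set a; b] = [set c; d] -> (a = c /\ b = d) \/ (a = d /\ b = c).
Proof.
move=> H.
have ha : a \in [set c; d] by rewrite -H set21.
have hb : b \in [set c; d] by rewrite -H set22.
have hc : c \in [set a; b] by rewrite H set21.
have hd : d \in [set a; b] by rewrite H set22.
rewrite !in_set2 in ha hb hc hd.
case/orP: ha => /eqP ea; case/orP: hb => /eqP eb; subst.
- by case/orP: hd => /eqP ->; left.
- by left.
- by right.
- by case/orP: hc => /eqP ->; right.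
Qed.

Lemma all_pairmap_path (A B : Type) (f : A -> A -> B) (P : pred B) a q :
  all P (pairmap f a q) = path (fun x y => P (f x y)) a q.
Proof. by elim: q a => //= b q IH a; rewrite IH. Qed.

Lemma mem_pairmapP (A : eqType) (B : eqType) (f : A -> A -> B) a q e :
  reflect (exists2 j, j < size q & e = f (nth a (a :: q) j) (nth a (a :: q) j.+1))
          (e \in pairmap f a q).
Proof.
apply: (iffP (nthP e)).
  move=> [j]; rewrite size_pairmap => hj <-; exists j => //.
  by rewrite (nth_pairmap a).
move=> [j hj ->]; exists j; first by rewrite size_pairmap.
by rewrite (nth_pairmap a).
Qed.

Fixpoint alt (A : eqType) (e : A) (l : seq A) : int :=
  match l with [::] => 0 | x :: r => ((x == e) : nat)%:Z - alt e r end%R.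

Lemma odd_pos_cons (A : Type) (x : A) r : odd_pos (x :: r) = x :: even_pos r.
Proof. by case: r. Qed.

Lemma alt_count (A : eqType) (e : A) l :
  ((count_mem e (odd_pos l))%:Z - (count_mem e (even_pos l))%:Z)%R = alt e l.
Proof.
elim: l => // x r IH.
rewrite odd_pos_cons /even_pos /= -IH /even_pos.
rewrite PoszD. lia.
Qed.

Lemma alt_nomem (A : eqType) (e : A) l : e \notin l -> alt e l = 0%R.
Proof.
elim: l => //= x r IH; rewrite in_cons negb_or => /andP [h1 h2].
by rewrite IH // eq_sym (negbTE h1) subr0.
Qed.

Section Main.
Variables (T : finType) (E : {set {set T}}) (p0 : T) (ps : seq T).
Hypothesis Hwalk : is_walk E p0 ps.
Hypothesis Huniq : uniq (p0 :: ps).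
Hypothesis Hdeg : forall i, 0 < i < size ps -> degree E (nth p0 (p0 :: ps) i) = 2.
Hypothesis Hev : ~~ odd (size ps).

Local Notation P := (p0 :: ps).
Local Notation x k := (nth p0 (p0 :: ps) k).
Local Notation t := (size ps).
Local Notation pe := (path_edges p0 ps).

Lemma pe_E e : e \in pe -> e \in E.
Proof.
by move: Hwalk; rewrite /is_walk -all_pairmap_path => /allP; apply.
Qed.

Lemma peP e : reflect (exists2 j, j < t & e = [set x j; x j.+1]) (e \in pe).
Proof. exact: mem_pairmapP. Qed.

Lemma idx_x j : j <= t -> index (x j) P = j.
Proof. by move=> hj; rewrite index_uniq. Qed.

Lemma x_idx u : u \in P -> x (index u P) = u.
Proof. exact: nth_index. Qed.

Lemma idx_le u : u \in P -> index u P <= t.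
Proof. by rewrite -index_mem. Qed.

Lemma x_mem j : j <= t -> x j \in P.
Proof. by move=> hj; rewrite mem_nth. Qed.

Lemma x_last : x t = last p0 ps.
Proof. by rewrite (last_nth p0). Qed.

Lemma pe_idx a b : [set a; b] \in pe ->
  [/\ a \in P, b \in P & (index b P = (index a P).+1 \/ index a P = (index b P).+1)].
Proof.
move=> /peP [j hj] /set2_inj [] [-> ->]; have hj' : j <= t by lia.
- by rewrite !x_mem ?idx_x //; split => //; lia.
- by rewrite !x_mem ?idx_x //; split => //; lia.
Qed.

Lemma L_end u v : u \in P -> [set u; v] \in E -> [set u; v] \notin pe ->
  u = p0 \/ u = last p0 ps.
Proof.
move=> uP uvE uvpe.
have hi := idx_le uP.
have xu := x_idx uP.
set i := index u P in hi xu.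
case: (posnP i) => [i0|ip]; first by left; rewrite -xu i0.
case: (ltngtP i t) => [it|it|it]; [ | lia | by right; rewrite -xu it x_last].
have := Hdeg (i:=i); rewrite ip it => /(_ isT).
rewrite /degree => hcard.
set N := [set w | [set x i; w] \in E] in hcard.
have h1 : x i.-1 \in N.
  rewrite inE setUC; apply: pe_E; apply/peP; exists i.-1; first lia.
  by rewrite prednK.
have h2 : x i.+1 \in N.
  rewrite inE; apply: pe_E; apply/peP; exists i => //.
have hne : x i.-1 != x i.+1.
  rewrite nth_uniq //=; lia.
have hN : N = [set x i.-1; x i.+1].
  apply/eqP; rewrite eq_sym eqEcard hcard cards2 hne andbT.
  by apply/subsetP => w; rewrite in_set2 => /orP [] /eqP ->.
have : v \in N by rewrite inE xu.
rewrite hN in_set2 => /orP [] /eqP vE; case/negP: uvpe; apply/peP.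
- exists i.-1; first lia. by rewrite prednK // -xu vE setUC.
- by exists i => //; rewrite -xu vE.
Qed.

Definition psi u := if u \in P then odd (index u P) else false.

Lemma psi_end u : u = p0 \/ u = last p0 ps -> psi u = false.
Proof.
rewrite /psi; case=> ->; first by rewrite mem_head index_head.
by rewrite -x_last x_mem // idx_x // (negbTE Hev).
Qed.

Lemma psi_np a b : [set a; b] \in E -> [set a; b] \notin pe ->
  psi a = false /\ psi b = false.
Proof.
move=> h1 h2; split.
  by case aP: (a \in P); [apply: psi_end; apply: L_end h1 h2| rewrite /psi aP].
case bP: (b \in P); last by rewrite /psi bP.
by apply: psi_end; apply: (L_end (v:=a)); rewrite // setUC.
Qed.

Lemma psi_pe a b : [set a; b] \in pe -> psi a = ~~ psi b.
Proof.
case/pe_idx => aP bP; rewrite /psi aP bP => -[] ->; rewrite /= ?negbK //.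
Qed.


Local Notation chi := (chi p0 ps).
Local Notation cw := (contr_walk p0 ps).

Lemma chi_pe a b : [set a; b] \in pe -> chi a = chi b.
Proof. by case/pe_idx => aP bP _; rewrite /chi aP bP. Qed.

Lemma contr_odd a s : is_walk E a s ->
  odd (size (cw a s)) = odd (size s) (+) psi a (+) psi (last a s).
Proof.
elim: s a => [|b s IH] a /=; first by rewrite addbb.
move=> /andP [hab hw]; case: ifP => hpe /=.
  rewrite IH // (psi_pe hpe).
  by case: (odd _); case: (psi b); case: (psi _).
have [ha hb] := psi_np hab (negbT hpe).
rewrite IH // ha hb.
by case: (odd _); case: (psi _).
Qed.

Lemma contr_last a s : last (chi a) (cw a s) = chi (last a s).
Proof.
elim: s a => [|b s IH] a //=.
by case: ifP => hpe //=; rewrite -IH (chi_pe hpe).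
Qed.

Lemma contr_walkE a s : is_walk E a s ->
  is_walk (contr_edges p0 ps E) (chi a) (cw a s).
Proof.
elim: s a => [|b s IH] a //= /andP [hab hw].
case: ifP => hpe /=; first by rewrite (chi_pe hpe) IH.
rewrite IH // andbT.
apply/imsetP; exists (a, b) => //.
by rewrite inE /= hab hpe.
Qed.

Lemma contr_nil a s :
  (cw a s == [::]) = path (fun u v => [set u; v] \in pe) a s.
Proof.
elim: s a => [|b s IH] a //=.
by case: ifP => hpe //=.
Qed.

Lemma contr_cat a s1 s2 : cw a (s1 ++ s2) = cw a s1 ++ cw (last a s1) s2.
Proof.
elim: s1 a => [|b s IH] a //=.
by case: ifP => hpe //=; rewrite IH.
Qed.

Definition H (j i : nat) : int :=
  if j < i then (if odd (i - j) then 1 else -1)%R else 0%R.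

Lemma H_step j ia ib : ib = ia.+1 \/ ia = ib.+1 ->
  (H j ia + H j ib)%R = Posz ((ia == j) && (ib == j.+1) || (ia == j.+1) && (ib == j) : nat).
Proof.
wlog: ia ib / ib = ia.+1.
  move=> W [h|h]; first exact: W h (or_introl h).
  rewrite addrC orbC andbC [X in _ || X]andbC; exact: W h (or_introl h).
move=> -> _; rewrite /H.
case: (ltngtP j ia) => hj.
- have -> : (j < ia.+1) = true by lia.
  rewrite subSn; last lia.
  have -> : (ia == j.+1) && (ia.+1 == j) = false by lia.
  by rewrite /=; case: (odd _).
- have -> : (j < ia.+1) = false by lia.
  have -> : (ia == j.+1) && (ia.+1 == j) = false by lia.
  by [].
- by subst; rewrite ltnSn subSn // subnn eqxx /=.
Qed.

Lemma delta_eq a b j : a \in P -> b \in P -> j < t ->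
  ([set a; b] == [set x j; x j.+1]) =
  (index a P == j) && (index b P == j.+1) || (index a P == j.+1) && (index b P == j).
Proof.
move=> aP bP hj; apply/eqP/idP.
  case/set2_inj => -[-> ->]; rewrite !idx_x //; try lia; by rewrite !eqxx ?orbT.
by case/orP => /andP [/eqP ha /eqP hb]; rewrite -(x_idx aP) -(x_idx bP) ha hb // setUC.
Qed.

Lemma alt_walk a s j : path (fun u v => [set u; v] \in pe) a s -> j < t ->
  if odd (size s)
  then alt [set x j; x j.+1] (walk_edges a s) = (H j (index a P) + H j (index (last a s) P))%R
  else alt [set x j; x j.+1] (walk_edges a s) = (H j (index a P) - H j (index (last a s) P))%R.
Proof.
move=> + hj; elim: s a => [|b s IH] a /=; first by rewrite subrr.
move=> /andP [hab hp].
have := IH _ hp; rewrite /walk_edges /= -/(walk_edges b s).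
have [aP bP hi] := pe_idx hab.
have := H_step j hi; rewrite -delta_eq //.
case: (odd _) => /= h1 h2; lia.
Qed.

Lemma part1 x0 s : primitive E x0 s ->
  closed_even_walk (contr_edges p0 ps E) (chi x0) (cw x0 s).
Proof.
case=> -[hw hc he hpos] hne _.
have hl : last x0 s = x0 by apply/eqP.
split.
- exact: contr_walkE.
- by rewrite /is_closed contr_last hl.
- by rewrite /is_even contr_odd // hl -addbA addbb addbF.
rewrite lt0n size_eq0 contr_nil; apply/negP => hp; apply: hne => e.
rewrite /e_plus /e_minus /monom.
have := alt_count e (walk_edges x0 s).
suff -> : alt e (walk_edges x0 s) = 0%R.
  by move/eqP; rewrite subr_eq0 => /eqP [].
case epe: (e \in pe).
  case/peP: epe => j hj ->.
  have := alt_walk hp hj; rewrite hl (negbTE he) => ->; exact: subrr.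
apply: alt_nomem; apply/negP => eW.
move: hp; rewrite -all_pairmap_path => /allP /(_ e eW) /=.
by move/negbT: epe => /negP; apply.
Qed.

Definition ok u := u \in P -> u = p0 \/ u = last p0 ps.

Lemma last_rev_belast (y : T) q : last (last y q) (rev (belast y q)) = y.
Proof. by case: q => //= z q; rewrite rev_cons last_rcons. Qed.

Lemma path_rev_sym (r : rel T) : (forall u v, r u v = r v u) ->
  path r p0 ps -> path r (last p0 ps) (rev (belast p0 ps)).
Proof.
move=> rs hp; rewrite rev_path.
by apply: sub_path hp => u v; rewrite rs.
Qed.

Lemma pe_path : path (fun u v => [set u; v] \in pe) p0 ps.
Proof. by rewrite -(all_pairmap_path (fun u v => [set u; v]) (fun e => e \in pe)); apply/allP. Qed.

Lemma conn a c : chi a = chi c -> ok a -> ok c ->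
  exists q, [/\ is_walk E a q, last a q = c, cw a q = [::] & ~~ odd (size q)].
Proof.
rewrite /chi; case aP: (a \in P); case cP: (c \in P) => //; last first.
  by case=> <- _ _; exists [::].
move=> _ /(_ aP) ha /(_ cP) hc.
case: ha => ->; case: hc => ->; try by exists [::].
- exists ps; split; [exact: Hwalk| by [] | apply/eqP; rewrite contr_nil; exact: pe_path | exact: Hev].
- exists (rev (belast p0 ps)); split.
  + apply: path_rev_sym => //; move=> ??; by rewrite setUC.
  + exact: last_rev_belast.
  + apply/eqP; rewrite contr_nil; apply: path_rev_sym; [move=> ??; by rewrite setUC | exact: pe_path].
  + by rewrite size_rev size_belast.
Qed.

Lemma decomp y b : [set y; b] \in contr_edges p0 ps E ->
  exists c d, [/\ [set c; d] \in E, [set c; d] \notin pe, chi c = y & chi d = b].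
Proof.
case/imsetP => -[u1 u2]; rewrite inE /= => /andP [h1 h2] /set2_inj [] [-> ->].
- by exists u1, u2.
- by exists u2, u1; rewrite setUC.
Qed.

Lemma ok_c c d : [set c; d] \in E -> [set c; d] \notin pe -> ok c /\ ok d.
Proof.
move=> h1 h2; split => hP; first exact: L_end h1 h2.
by apply: (L_end (v := c)); rewrite // setUC.
Qed.

Lemma lift s' : forall y0 x0 z, is_walk (contr_edges p0 ps E) y0 s' ->
  chi x0 = y0 -> ok x0 -> chi z = last y0 s' -> ok z ->
  exists s, [/\ is_walk E x0 s, last x0 s = z, cw x0 s = s' & odd (size s) = odd (size s')].
Proof.
elim: s' => [|b s' IH] y0 x0 z /=.
  move=> _ <- hx hz okz; have [q [h1 h2 h3 h4]] := conn (esym hz) hx okz.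
  by exists q; split => //; apply: negbTE.
move=> /andP [hyb hw] hx okx hz okz.
have [c [d [cdE cdpe hc hd]]] := decomp hyb.
have [okc okd] := ok_c cdE cdpe.
have [q [q1 q2 q3 q4]] := conn (etrans hx (esym hc)) okx okc.
have [r [r1 r2 r3 r4]] := IH b d z hw hd okd hz okz.
exists (q ++ d :: r); split.
- by rewrite /is_walk cat_path -/(is_walk E x0 q) q1 /= q2 cdE.
- by rewrite last_cat q2.
- by rewrite contr_cat q3 q2 /= (negbTE cdpe) hd r3.
- by rewrite size_cat oddD /= (negbTE q4) r4.
Qed.

Lemma part2 y0 s' : closed_even_walk (contr_edges p0 ps E) y0 s' ->
  exists x0 s, closed_even_walk E x0 s /\ chi x0 = y0 /\ cw x0 s = s'.
Proof.
case=> hw hc he hpos.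
case: s' hw hc he hpos => [//|b r] hw hc he _.
have hyb : [set y0; b] \in contr_edges p0 ps E by case/andP: hw.
have [c [d [cdE cdpe hc' hd]]] := decomp hyb.
have [okc _] := ok_c cdE cdpe.
have [s [s1 s2 s3 s4]] := lift hw hc' okc (etrans hc' (esym (eqP hc))) okc.
exists c, s; split => //; split => //.
- by rewrite /is_closed s2.
- by rewrite /is_even s4.
- by case: s s3 {s1 s2 s4}.
Qed.

End Main.

Theorem lemma2p6 (T : finType) (E : {set {set T}}) (p0 : T) (ps : seq T) :
  simple_graph E -> is_gpath E p0 ps -> ~~ odd (size ps) ->
  (forall (x0 : T) (s : seq T), primitive E x0 s ->
     closed_even_walk (contr_edges p0 ps E) (chi p0 ps x0) (contr_walk p0 ps x0 s)) /\
  (forall (y0 : option T) (s' : seq (option T)),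
     closed_even_walk (contr_edges p0 ps E) y0 s' ->
     exists (x0 : T) (s : seq T),
       closed_even_walk E x0 s /\ chi p0 ps x0 = y0 /\ contr_walk p0 ps x0 s = s').
Proof.
move=> _ [hw hu hd] hev; split.
- by move=> x0 s h; apply: part1.
- by move=> y0 s' h; apply: part2.
Qed.
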